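(* Let $\varphi:\Omega\to\mathbb R$ be a summable potential. Then (1) $\hat\sigma$ is of bounded access if and only if condition (A) holds; (2) $\hat\sigma$ is of finite range if and only if condition (B) holds.
   Context: $(X,\mathcal F,m)$ is a complete probability space, $\theta:X\to X$ an invertible measurable $m$-preserving map, $E=\mathbb N$, and $x\mapsto A(x)=(A_{ij}(x))_{i,j\in E}$ a measurable map into $\{0,1\}$-matrices. $E_x^\infty$ is the set of $\omega\in E^{\mathbb N}$ with $A_{\omega_i\omega_{i+1}}(\theta^i(x))=1$ for all $i\ge0$; $[e]_x=\{\omega\in E_x^\infty:\omega_0=e\}$, $[0,\dots,l]_x=\{\omega\in E_x^\infty:\omega_0\le l\}$, complements taken in $E_x^\infty$. $d(\omega,\tau)=e^{-\min\{n:\omega_n\ne\tau_n\}}$. $\sigma_x$ is the shift $E_x^\infty\to E_{\theta(x)}^\infty$, $\Omega=\bigcup_x\{x\}\times E_x^\infty$, $\hat\sigma(x,\omega)=(\theta(x),\sigma_x\omega)$, assumed topologically mixing (for all $a,b\in E$ there is $N$ such that for $n\ge N$ and all $x$ there is a word $\omega$ of length $n+1$ with $a\omega b$ admissible at $x$). Finite range: for every $e\in E$ there is a finite $D_e\subset E$ with $\{j:A_{ej}(x)=1\}\subset D_e$ for $m$-a.e. $x$. Bounded access: for every $b\in E$ there is $b^*\in E$ such that for $m$-a.e. $x$ there is $a\le b^*$ with $A_{ab}(x)=1$. Fix $\alpha>0$, $v_\alpha(g)=\sup\{|g(\tau)-g(\omega)|/d(\tau,\omega)^\alpha:\tau\ne\omega,\tau_0=\omega_0\}$.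 A summable potential is a measurable $\varphi:\Omega\to\mathbb R$ with $\varphi_x=\varphi(x,\cdot)$ continuous, $\operatorname{ess\,sup}_xv_\alpha(\varphi_x)<\infty$, such that for every $e\in E$ there are $0<c_e<C_e<\infty$ with $c_e\le e^{\varphi_x}\le C_e$ on $[e]_x$ for a.e. $x$, and $\lim_{l\to\infty}\operatorname{ess\,sup}_x\sup\mathcal L_x(1_{[0,\dots,l]_x^c})=0$, where $\mathcal L_xg(\omega)=\sum_{e\in E:\,A_{e\omega_0}(x)=1}g(e\omega)e^{\varphi_x(e\omega)}$ for $\omega\in E_{\theta(x)}^\infty$. Condition (A): for every $e\in E$ there is $M_e\in(0,\infty)$ with $M_e^{-1}\le\mathcal L_x1$ on $[e]_{\theta(x)}$ for a.e. $x$. Condition (B): $\lim_{e\to\infty}\operatorname{ess\,sup}_x\sup_{[e]_{\theta(x)}}\mathcal L_x1=0$. *)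

(* Defs.v *)
From Stdlib Require Import Reals List Classical.
Open Scope R_scope.

Definition sigma_algebra {X : Type} (M : (X -> Prop) -> Prop) : Prop :=
  M (fun _ => True) /\
  (forall A, M A -> M (fun x => ~ A x)) /\
  (forall F : nat -> X -> Prop, (forall n, M (F n)) -> M (fun x => exists n, F n x)).

Definition probability_measure {X : Type} (M : (X -> Prop) -> Prop)
  (m : (X -> Prop) -> R) : Prop :=
  sigma_algebra M /\
  m (fun _ => True) = 1 /\
  (forall A, M A -> 0 <= m A) /\
  (forall F : nat -> X -> Prop,
      (forall n, M (F n)) ->
      (forall i j x, i <> j -> F i x -> F j x -> False) ->
      infinite_sum (fun n => m (F n)) (m (fun x => exists n, F n x))).

Definition complete_measure {X : Type} (M : (X -> Prop) -> Prop)
  (m : (X -> Prop) -> R) : Prop :=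
  forall A B, M B -> m B = 0 -> (forall x, A x -> B x) -> M A.

Definition ae {X : Type} (M : (X -> Prop) -> Prop) (m : (X -> Prop) -> R)
  (P : X -> Prop) : Prop :=
  exists N, M N /\ m N = 0 /\ forall x, ~ N x -> P x.

Definition invertible_mpt {X : Type} (M : (X -> Prop) -> Prop)
  (m : (X -> Prop) -> R) (theta : X -> X) : Prop :=
  exists theta_inv : X -> X,
    (forall x, theta_inv (theta x) = x) /\ (forall x, theta (theta_inv x) = x) /\
    (forall A, M A -> M (fun x => A (theta x))) /\
    (forall A, M A -> M (fun x => A (theta_inv x))) /\
    (forall A, M A -> m (fun x => A (theta x)) = m A).

Definition generated {T : Type} (G : (T -> Prop) -> Prop) (S : T -> Prop) : Prop :=
  forall Sig, sigma_algebra Sig -> (forall B, G B -> Sig B) -> Sig S.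

(* product sigma-algebra on X x E^N (E = nat, E^N with the product topology,
   generated by measurable rectangles B x cylinder) *)
Definition prod_rectangle {X : Type} (M : (X -> Prop) -> Prop)
  (S : X * (nat -> nat) -> Prop) : Prop :=
  exists (B : X -> Prop) (c : list nat), M B /\
    forall p, S p <-> (B (fst p) /\ forall i, (i < length c)%nat -> snd p i = nth i c 0%nat).

Definition prod_measurable {X : Type} (M : (X -> Prop) -> Prop) :=
  generated (@prod_rectangle X M).

Definition iter_th {X : Type} (theta : X -> X) (i : nat) (x : X) : X :=
  Nat.iter i theta x.

Definition admissible {X : Type} (theta : X -> X) (A : X -> nat -> nat -> bool)
  (x : X) (w : nat -> nat) : Prop :=
  forall i, A (iter_th theta i x) (w i) (w (S i)) = true.

Definition cons_seq (e : nat) (w : nat -> nat) : nat -> nat :=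
  fun n => match n with O => e | S k => w k end.

Definition top_mixing {X : Type} (theta : X -> X) (A : X -> nat -> nat -> bool) : Prop :=
  forall a b : nat, exists N : nat, forall n : nat, (N <= n)%nat -> forall x : X,
    (* the word a w_0 ... w_n b, written as u with u 0 = a, u (n+2) = b *)
    exists u : nat -> nat, u O = a /\ u (S (S n)) = b /\
      forall i, (i < S (S n))%nat -> A (iter_th theta i x) (u i) (u (S i)) = true.

Definition finite_range {X : Type} (M : (X -> Prop) -> Prop) (m : (X -> Prop) -> R)
  (A : X -> nat -> nat -> bool) : Prop :=
  forall e : nat, exists D : list nat,
    ae M m (fun x => forall j, A x e j = true -> In j D).

Definition bounded_access {X : Type} (M : (X -> Prop) -> Prop) (m : (X -> Prop) -> R)
  (A : X -> nat -> nat -> bool) : Prop :=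
  forall b : nat, exists bstar : nat,
    ae M m (fun x => exists a, (a <= bstar)%nat /\ A x a b = true).

Fixpoint L_partial {X : Type} (A : X -> nat -> nat -> bool)
  (phi : X -> (nat -> nat) -> R) (x : X) (g : (nat -> nat) -> R)
  (w : nat -> nat) (N : nat) : R :=
  match N with
  | O => 0
  | S k => L_partial A phi x g w k +
           (if A x k (w O) then g (cons_seq k w) * exp (phi x (cons_seq k w)) else 0)
  end.

(* L_x g (w) <= c   (the series has nonnegative terms for g >= 0;
   its value in [0, +oo] is the sup of its partial sums) *)
Definition L_le {X : Type} A (phi : X -> (nat -> nat) -> R) x g w (c : R) : Prop :=
  forall N, L_partial A phi x g w N <= c.

Definition L_ge {X : Type} A (phi : X -> (nat -> nat) -> R) x g w (c : R) : Prop :=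
  forall c', c' < c -> exists N, c' <= L_partial A phi x g w N.

Definition one_fun : (nat -> nat) -> R := fun _ => 1.

Definition ind_tail (l : nat) : (nat -> nat) -> R :=
  fun w => if Nat.leb (w O) l then 0 else 1.

Definition summable_potential {X : Type} (M : (X -> Prop) -> Prop)
  (m : (X -> Prop) -> R) (theta : X -> X) (A : X -> nat -> nat -> bool)
  (alpha : R) (phi : X -> (nat -> nat) -> R) : Prop :=
  (* measurability of phi on Omega (trace of the product sigma-algebra) *)
  (forall c : R, exists S, prod_measurable M S /\
     forall x w, admissible theta A x w -> (S (x, w) <-> phi x w < c)) /\
  (forall x w, admissible theta A x w -> forall eps, eps > 0 ->
     exists n, forall t, admissible theta A x t ->
       (forall k, (k <= n)%nat -> t k = w k) -> Rabs (phi x t - phi x w) < eps) /\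
  (* ess sup_x v_alpha(phi_x) < oo ; d(t,w)^alpha = exp(-alpha n), n = first
     index where t and w differ *)
  (exists C : R, ae M m (fun x =>
     forall t w n, admissible theta A x t -> admissible theta A x w ->
       t O = w O -> (forall k, (k < n)%nat -> t k = w k) -> t n <> w n ->
       Rabs (phi x t - phi x w) <= C * exp (- alpha * INR n))) /\
  (forall e : nat, exists ce Ce : R, 0 < ce /\ ce < Ce /\
     ae M m (fun x => forall w, admissible theta A x w -> w O = e ->
       ce <= exp (phi x w) <= Ce)) /\
  (forall eps, eps > 0 -> exists l0 : nat, forall l, (l0 <= l)%nat ->
     ae M m (fun x => forall w, admissible theta A (theta x) w ->
       L_le A phi x (ind_tail l) w eps)).

Definition condition_A {X : Type} (M : (X -> Prop) -> Prop)
  (m : (X -> Prop) -> R) (theta : X -> X) (A : X -> nat -> nat -> bool)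
  (phi : X -> (nat -> nat) -> R) : Prop :=
  forall e : nat, exists Me : R, 0 < Me /\
    ae M m (fun x => forall w, admissible theta A (theta x) w -> w O = e ->
      L_ge A phi x one_fun w (/ Me)).

Definition condition_B {X : Type} (M : (X -> Prop) -> Prop)
  (m : (X -> Prop) -> R) (theta : X -> X) (A : X -> nat -> nat -> bool)
  (phi : X -> (nat -> nat) -> R) : Prop :=
  forall eps, eps > 0 -> exists e0 : nat, forall e, (e0 <= e)%nat ->
    ae M m (fun x => forall w, admissible theta A (theta x) w -> w O = e ->
      L_le A phi x one_fun w eps).

(* Main.v *)
Require Import Defs.
From Stdlib Require Import Reals List Classical.
From Stdlib Require Import Lra Lia ClassicalEpsilon FunctionalExtensionality PropExtensionality.
Open Scope R_scope.

Lemma set_ext {X : Type} (P Q : X -> Prop) : (forall x, P x <-> Q x) -> P = Q.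
Proof.
  intros H; apply functional_extensionality; intro x; apply propositional_extensionality; auto.
Qed.

Lemma choice_gen {I T : Type} (Q : I -> T -> Prop) :
  (forall n, exists y, Q n y) -> exists f : I -> T, forall n, Q n (f n).
Proof.
  intros H. exists (fun n => proj1_sig (constructive_indefinite_description _ (H n))).
  intro n; exact (proj2_sig (constructive_indefinite_description _ (H n))).
Qed.

Lemma lim_eventually (f : nat -> R) l s K : infinite_sum f l ->
  (forall n, (K <= n)%nat -> sum_f_R0 f n = s) -> l = s.
Proof.
  intros Hs Hf. destruct (Req_dec l s) as [|Hne]; auto. exfalso.
  assert (Hp: Rabs (l - s) > 0) by (apply Rabs_pos_lt; lra).
  destruct (Hs _ Hp) as [N HN].
  specialize (HN (max N K) (Nat.le_max_l _ _)).
  rewrite Hf in HN by lia. unfold R_dist in HN. rewrite Rabs_minus_sym in HN. lra.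
Qed.

Lemma const_sum c : infinite_sum (fun _ => c) c -> c = 0.
Proof.
  intros Hs.
  assert (Hsum : forall n, sum_f_R0 (fun _ => c) n = INR (S n) * c).
  { induction n. simpl; ring. rewrite tech5, IHn. rewrite (S_INR (S n)). ring. }
  destruct (Req_dec c 0) as [|Hne]; auto. exfalso.
  assert (Hp: Rabs c / 2 > 0) by (assert (Rabs c > 0) by (apply Rabs_pos_lt; auto); lra).
  destruct (Hs _ Hp) as [N HN]. specialize (HN (S N) ltac:(lia)).
  unfold R_dist in HN. rewrite Hsum in HN.
  replace (INR (S (S N)) * c - c) with (INR (S N) * c) in HN by (rewrite (S_INR (S N)); ring).
  rewrite Rabs_mult, (Rabs_right (INR (S N))) in HN by (apply Rle_ge, pos_INR).
  rewrite S_INR in HN. pose proof (pos_INR N). pose proof (Rabs_pos c).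
  assert (Rabs c > 0) by (apply Rabs_pos_lt; auto). nra.
Qed.


Lemma M_empty {X : Type} (M : (X -> Prop) -> Prop) m :
  probability_measure M m -> M (fun _ => False).
Proof.
  intros [[H1 [H2 H3]] _].
  replace (fun _ : X => False) with (fun x : X => ~ True).
  apply H2; auto. apply set_ext; tauto.
Qed.

Lemma m_empty {X : Type} (M : (X -> Prop) -> Prop) m :
  probability_measure M m -> m (fun _ => False) = 0.
Proof.
  intros Hp. pose proof (M_empty M m Hp) as HE.
  destruct Hp as [_ [_ [_ Hadd]]].
  specialize (Hadd (fun _ _ => False) (fun _ => HE) (fun i j x _ h _ => h)).
  simpl in Hadd.
  replace (fun x : X => exists _ : nat, False) with (fun _ : X => False) in Hadd.
  apply const_sum; exact Hadd.
  apply set_ext; intros x; split; [tauto| intros [_ h]; exact h].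
Qed.

Lemma null_subset {X : Type} (M : (X -> Prop) -> Prop) m (A B : X -> Prop) :
  probability_measure M m -> complete_measure M m ->
  M B -> m B = 0 -> (forall x, A x -> B x) -> m A = 0.
Proof.
  intros Hp Hc HB HmB HAB.
  assert (MA : M A) by (apply (Hc A B); auto).
  set (D := fun x => B x /\ ~ A x).
  assert (MD : M D) by (apply (Hc D B); auto; intros x [h _]; auto).
  pose proof (M_empty M m Hp) as HE. pose proof (m_empty M m Hp) as HmE.
  destruct Hp as [_ [_ [Hpos Hadd]]].
  set (G := fun n => match n with 0%nat => A | 1%nat => D | _ => fun _ : X => False end).
  assert (HG : forall n, M (G n)) by (intros [|[|n]]; simpl; auto).
  assert (Hdis : forall i j x, i <> j -> G i x -> G j x -> False).
  { intros [|[|i]] [|[|j]] x Hij Hi Hj; simpl in *; unfold D in *; try tauto; lia. }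
  specialize (Hadd G HG Hdis).
  replace (fun x => exists n, G n x) with B in Hadd.
  2:{ apply set_ext; intros x; split.
      - intros Hx; destruct (classic (A x)). exists 0%nat; auto. exists 1%nat; simpl; unfold D; auto.
      - intros [[|[|n]] Hn]; simpl in Hn; unfold D in *; firstorder. }
  assert (Heq : m B = m A + m D).
  { apply (lim_eventually _ _ _ 1 Hadd). intros n Hn.
    induction n. lia. destruct n. simpl; reflexivity.
    rewrite tech5, IHn by lia. simpl. rewrite HmE. ring. }
  pose proof (Hpos A MA). pose proof (Hpos D MD). lra.
Qed.

Lemma minimal (P : nat -> Prop) n : P n -> exists k, P k /\ forall j, (j < k)%nat -> ~ P j.
Proof.
  induction n as [n IH] using (well_founded_induction Wf_nat.lt_wf). intros Pn.
  destruct (classic (exists j, (j < n)%nat /\ P j)) as [[j [Hj Pj]]|Hno].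
  - apply (IH j Hj Pj).
  - exists n; split; auto. intros j Hj Pj; apply Hno; eauto.
Qed.

Lemma null_union {X : Type} (M : (X -> Prop) -> Prop) m (N : nat -> X -> Prop) :
  probability_measure M m -> complete_measure M m ->
  (forall n, M (N n)) -> (forall n, m (N n) = 0) ->
  M (fun x => exists n, N n x) /\ m (fun x => exists n, N n x) = 0.
Proof.
  intros Hp Hc HM Hm0. pose proof Hp as Hp'.
  destruct Hp' as [[_ [_ Hsig]] [_ [Hpos Hadd]]].
  split. apply Hsig; auto.
  set (F := fun n x => N n x /\ forall k, (k < n)%nat -> ~ N k x).
  assert (HF : forall n, M (F n)) by (intros n; apply (Hc _ (N n)); auto; intros x [h _]; auto).
  assert (HF0 : forall n, m (F n) = 0).
  { intros n; apply (null_subset M m _ (N n)); auto. intros x [h _]; auto. }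
  assert (Hdis : forall i j x, i <> j -> F i x -> F j x -> False).
  { intros i j x Hij [Hi Hi'] [Hj Hj'].
    destruct (Nat.lt_total i j) as [h|[h|h]]; [apply (Hj' i h Hi)|lia|apply (Hi' j h Hj)]. }
  specialize (Hadd F HF Hdis).
  replace (fun x => exists n, F n x) with (fun x => exists n, N n x) in Hadd.
  2:{ apply set_ext; intros x; split.
      - intros [n Hn]. destruct (minimal (fun k => N k x) n Hn) as [k [Hk1 Hk2]].
        exists k; split; auto.
      - intros [n [Hn _]]; eauto. }
  apply (lim_eventually _ _ _ 0 Hadd). intros n _.
  induction n; simpl; rewrite ?IHn, HF0; ring.
Qed.

Lemma ae_mono {X : Type} (M : (X -> Prop) -> Prop) m (P Q : X -> Prop) :
  ae M m P -> (forall x, P x -> Q x) -> ae M m Q.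
Proof.
  intros [N [H1 [H2 H3]]] H. exists N; repeat split; auto.
Qed.

Lemma ae_true {X : Type} (M : (X -> Prop) -> Prop) m :
  probability_measure M m -> ae M m (fun _ => True).
Proof.
  intros Hp. exists (fun _ => False). repeat split.
  apply (M_empty M m Hp). apply (m_empty M m Hp).
Qed.

Lemma ae_forall {X : Type} (M : (X -> Prop) -> Prop) m (P : nat -> X -> Prop) :
  probability_measure M m -> complete_measure M m ->
  (forall n, ae M m (P n)) -> ae M m (fun x => forall n, P n x).
Proof.
  intros Hp Hc H. destruct (choice_gen _ H) as [N HN].
  destruct (null_union M m N Hp Hc) as [H1 H2].
  intros n; apply (HN n). intros n; apply (HN n).
  exists (fun x => exists n, N n x); repeat split; auto.
  intros x Hx n. apply (HN n). intro h; apply Hx; eauto.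
Qed.

Lemma ae_and {X : Type} (M : (X -> Prop) -> Prop) m (P Q : X -> Prop) :
  probability_measure M m -> complete_measure M m ->
  ae M m P -> ae M m Q -> ae M m (fun x => P x /\ Q x).
Proof.
  intros Hp Hc HP HQ.
  pose proof (ae_forall M m (fun n => match n with 0%nat => P | _ => Q end) Hp Hc) as H.
  apply (ae_mono _ _ _ _ (H ltac:(intros [|n]; auto))).
  intros x Hx; split; [apply (Hx 0%nat)|apply (Hx 1%nat)].
Qed.

Lemma iter_shift {X : Type} (theta : X -> X) i x :
  iter_th theta i (theta x) = theta (iter_th theta i x).
Proof.
  unfold iter_th. induction i; simpl; auto. rewrite IHi; auto.
Qed.

Lemma iter_S {X : Type} (theta : X -> X) i x :
  iter_th theta (S i) x = theta (iter_th theta i x).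
Proof. reflexivity. Qed.

Lemma cons_adm {X : Type} (theta : X -> X) (A : X -> nat -> nat -> bool) (x : X) (w : nat -> nat) (a : nat) :
  admissible theta A (theta x) w -> A x a (w O) = true ->
  admissible theta A x (Defs.cons_seq a w).
Proof.
  intros Hw Ha [|i]; simpl. exact Ha.
  pose proof (Hw i) as h. rewrite iter_shift in h. exact h.
Qed.

Fixpoint st {X : Type} (theta : X -> X) (P : nat) (y : X) (i : nat) : X * nat :=
  match i with
  | O => (y, 0%nat)
  | S k => let (z, r) := st theta P y k in
           if Nat.eqb r P then (iter_th theta (S P) z, 0%nat) else (z, S r)
  end.

Lemma st_inv {X : Type} (theta : X -> X) P y i :
  (snd (st theta P y i) <= P)%nat /\
  iter_th theta i y = iter_th theta (snd (st theta P y i)) (fst (st theta P y i)).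
Proof.
  induction i. simpl; split; auto; lia.
  cbn [st]. destruct (st theta P y i) as [z r] eqn:E. simpl in IHi. destruct IHi as [h1 h2].
  destruct (Nat.eqb_spec r P); cbn [fst snd]; split; try lia.
  - rewrite iter_S, h2. subst. reflexivity.
  - rewrite iter_S, h2. reflexivity.
Qed.

Lemma exists_adm {X : Type} (theta : X -> X) (A : X -> nat -> nat -> bool) :
  top_mixing theta A -> forall y b, exists w, admissible theta A y w /\ w O = b.
Proof.
  intros Hmix y b. destruct (Hmix b b) as [N HN].
  destruct (choice_gen (fun z u => u O = b /\ u (S (S N)) = b /\
      forall i, (i < S (S N))%nat -> A (iter_th theta i z) (u i) (u (S i)) = true))
    as [f Hf].
  { intros z. apply (HN N (le_n N) z). }
  exists (fun i => f (fst (st theta (S N) y i)) (snd (st theta (S N) y i))).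
  split. 2:{ simpl. apply (Hf y). }
  intro i. destruct (st_inv theta (S N) y i) as [h1 h2]. rewrite h2.
  simpl. destruct (st theta (S N) y i) as [z r] eqn:E. simpl in *.
  destruct (Nat.eqb_spec r (S N)); simpl.
  - rewrite (proj1 (Hf _)). subst r.
    destruct (Hf z) as [_ [Hb' Hz]]. rewrite <- Hb'. apply Hz. lia.
  - destruct (Hf z) as [_ [_ Hz]]. apply Hz. lia.
Qed.

Lemma L_mono {X : Type} (A : X -> nat -> nat -> bool) (phi : X -> (nat -> nat) -> R) (x : X) (g : (nat -> nat) -> R) (w : nat -> nat) :
  (forall w', 0 <= g w') -> forall n k, (n <= k)%nat ->
  L_partial A phi x g w n <= L_partial A phi x g w k.
Proof.
  intros Hg n k Hle. induction Hle. lra. simpl.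
  destruct (A x m (w O)). pose proof (Hg (Defs.cons_seq m w)). pose proof (exp_pos (phi x (Defs.cons_seq m w))).
  nra. lra.
Qed.

Lemma L_term {X : Type} (A : X -> nat -> nat -> bool) (phi : X -> (nat -> nat) -> R) (x : X) (g : (nat -> nat) -> R) (w : nat -> nat) (a : nat) :
  (forall w', 0 <= g w') ->
  L_partial A phi x g w (S a) >=
  (if A x a (w O) then g (Defs.cons_seq a w) * exp (phi x (Defs.cons_seq a w)) else 0).
Proof.
  intros Hg. simpl. pose proof (L_mono A phi x g w Hg 0 a ltac:(lia)). simpl in H. lra.
Qed.

Lemma L_eq {X : Type} (A : X -> nat -> nat -> bool) (phi : X -> (nat -> nat) -> R) (x : X) (w : nat -> nat) (l : nat) :
  (forall a, (a <= l)%nat -> A x a (w O) = false) -> forall N,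
  L_partial A phi x one_fun w N = L_partial A phi x (ind_tail l) w N.
Proof.
  intros H N. induction N; simpl; auto. rewrite IHN. f_equal.
  unfold ind_tail, one_fun. simpl. destruct (Nat.leb N l) eqn:El.
  - apply Nat.leb_le in El. rewrite H; auto.
  - reflexivity.
Qed.

Fixpoint cmin (f : nat -> R) (n : nat) : R :=
  match n with O => f O | S k => Rmin (cmin f k) (f (S k)) end.

Lemma cmin_le f n a : (a <= n)%nat -> cmin f n <= f a.
Proof.
  induction n; intros H. replace a with 0%nat by lia. simpl; lra.
  simpl. destruct (Nat.eq_dec a (S n)). subst; apply Rmin_r.
  eapply Rle_trans. apply Rmin_l. apply IHn; lia.
Qed.

Lemma cmin_pos f n : (forall a, 0 < f a) -> 0 < cmin f n.
Proof.
  intros H; induction n; simpl; auto. apply Rmin_glb_lt; auto.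
Qed.

Definition listmax (l : list nat) : nat := fold_right Nat.max 0%nat l.

Lemma listmax_in j l : In j l -> (j <= listmax l)%nat.
Proof. induction l; simpl; intros H; [tauto|]. destruct H; subst; [lia|]. specialize (IHl H); lia. Qed.

Fixpoint Kf (D : nat -> list nat) (n : nat) : nat :=
  match n with O => listmax (D O) | S k => Nat.max (Kf D k) (listmax (D (S k))) end.

Lemma Kf_le D n a : (a <= n)%nat -> (listmax (D a) <= Kf D n)%nat.
Proof.
  induction n; intros H. replace a with 0%nat by lia. simpl; lia.
  simpl. destruct (Nat.eq_dec a (S n)). subst; lia. specialize (IHn ltac:(lia)); lia.
Qed.

Theorem mainTheorem7 (X : Type) (M : (X -> Prop) -> Prop) (m : (X -> Prop) -> R)
  (theta : X -> X) (A : X -> nat -> nat -> bool) (alpha : R)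
  (phi : X -> (nat -> nat) -> R) :
  probability_measure M m ->
  complete_measure M m ->
  invertible_mpt M m theta ->
  (forall i j : nat, M (fun x => A x i j = true)) ->
  top_mixing theta A ->
  alpha > 0 ->
  summable_potential M m theta A alpha phi ->
  (bounded_access M m A <-> condition_A M m theta A phi) /\
  (finite_range M m A <-> condition_B M m theta A phi).
Proof.
  intros Hp Hc _ _ Hmix _ [_ [_ [_ [Hce Htail]]]].
  assert (Hone : forall w', 0 <= one_fun w') by (intros; unfold one_fun; lra).
  split; split.
  - intros Hba e. destruct (Hba e) as [bs Hae1].
    destruct (choice_gen (fun a c => 0 < c /\ ae M m (fun x => forall w,
        admissible theta A x w -> w O = a -> c <= exp (phi x w)))) as [cf Hcf].
    { intros a. destruct (Hce a) as [ce [Ce [H1 [H2 H3]]]]. exists ce; split; auto.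
      apply (ae_mono _ _ _ _ H3). intros x Hx w Hw H0. apply (Hx w Hw H0). }
    assert (Hcp : 0 < cmin cf bs) by (apply cmin_pos; intros a; apply (Hcf a)).
    exists (/ cmin cf bs). split. apply Rinv_0_lt_compat; auto.
    apply (ae_mono _ _ _ _ (ae_and M m _ _ Hp Hc Hae1
             (ae_forall M m _ Hp Hc (fun a => proj2 (Hcf a))))).
    intros x [[a [Ha HA]] Hall] w Hw Hw0 c' Hc'. rewrite Rinv_inv in Hc'.
    exists (S bs).
    assert (adm : admissible theta A x (Defs.cons_seq a w)) by (apply cons_adm; auto; rewrite Hw0; auto).
    pose proof (Hall a (Defs.cons_seq a w) adm eq_refl) as Hb.
    pose proof (L_term A phi x one_fun w a Hone) as Ht. rewrite Hw0, HA in Ht.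
    unfold one_fun at 2 in Ht.
    pose proof (L_mono A phi x one_fun w Hone (S a) (S bs) ltac:(lia)).
    pose proof (cmin_le cf bs a Ha). lra.
  - intros HcA b. destruct (HcA b) as [Me [HMe HaeA]].
    assert (Hi : 0 < / Me) by (apply Rinv_0_lt_compat; auto).
    destruct (Htail (/ Me / 3) ltac:(lra)) as [l0 Hl0].
    exists l0.
    apply (ae_mono _ _ _ _ (ae_and M m _ _ Hp Hc HaeA (Hl0 l0 (le_n _)))).
    intros x [H1 H2]. apply NNPP; intro Hno.
    destruct (exists_adm theta A Hmix (theta x) b) as [w [Hw Hw0]].
    destruct (H1 w Hw Hw0 (/ Me / 2) ltac:(lra)) as [N HN].
    rewrite (L_eq A phi x w l0) in HN.
    + pose proof (H2 w Hw N). lra.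
    + rewrite Hw0. intros a Ha. destruct (A x a b) eqn:E; auto. exfalso; apply Hno; eauto.
  - intros Hfr eps Heps. destruct (Htail eps Heps) as [l0 Hl0].
    destruct (choice_gen _ Hfr) as [D HD].
    exists (S (Kf D l0)). intros e He.
    apply (ae_mono _ _ _ _ (ae_and M m _ _ Hp Hc (Hl0 l0 (le_n _)) (ae_forall M m _ Hp Hc HD))).
    intros x [H1 H2] w Hw Hw0 N. rewrite (L_eq A phi x w l0). apply H1; auto.
    intros a Ha. destruct (A x a (w O)) eqn:E; auto. exfalso.
    pose proof (listmax_in _ _ (H2 a (w O) E)). pose proof (Kf_le D l0 a Ha). lia.
  - intros HB e. destruct (Hce e) as [ce [Ce [Hc1 [Hc2 Hc3]]]].
    destruct (HB (ce / 2) ltac:(lra)) as [e0 He0].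
    exists (seq 0 e0).
    assert (Hj : forall j, ae M m (fun x => (e0 <= j)%nat -> forall w,
               admissible theta A (theta x) w -> w O = j -> L_le A phi x one_fun w (ce / 2))).
    { intros j. destruct (Compare_dec.le_lt_dec e0 j) as [h|h].
      - apply (ae_mono _ _ _ _ (He0 j h)). intros x Hx _; exact Hx.
      - apply (ae_mono _ _ _ _ (ae_true M m Hp)). intros; lia. }
    apply (ae_mono _ _ _ _ (ae_and M m _ _ Hp Hc Hc3 (ae_forall M m _ Hp Hc Hj))).
    intros x [H1 H2] j HA. apply in_seq. split; [lia|].
    destruct (Compare_dec.lt_dec j e0) as [h|h]; [lia|]. exfalso.
    destruct (exists_adm theta A Hmix (theta x) j) as [w [Hw Hw0]].
    pose proof (H2 j ltac:(lia) w Hw Hw0 (S e)) as Hb.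
    assert (adm : admissible theta A x (Defs.cons_seq e w)) by (apply cons_adm; auto; rewrite Hw0; auto).
    pose proof (H1 (Defs.cons_seq e w) adm eq_refl) as [Hlo _].
    pose proof (L_term A phi x one_fun w e Hone) as Ht. rewrite Hw0, HA in Ht.
    unfold one_fun at 2 in Ht. lra.
Qed.
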